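(* Let $d\ge 2$ and let $\varphi:[0,\infty)\to[0,1]$ be the Laplace transform of a strictly positive random variable, continuous and strictly decreasing with $\varphi(0)=1$ and $\lim_{t\to\infty}\varphi(t)=0$, and let $C(u_1,\dots,u_d)=\varphi\big(\sum_{i=1}^d\varphi^{-1}(u_i)\big)$ be the associated Archimedean copula. Suppose $\varphi\in\Gamma_\alpha(g)$ for some $\alpha>0$ and some positive measurable function $g$ that is ultimately decreasing. Suppose moreover that for some $k$ with $1\le k\le d$, $$\lim_{t\to\infty}\frac{\varphi(td)}{\varphi(t)^k}=\tau\in(0,\infty).$$ Then for every $w=(w_1,\dots,w_d)\in\mathbb{R}_+^d$, $$\lim_{u\downarrow 0}\frac{C(uw_1,\dots,uw_d)}{u^k}=\tau\prod_{i=1}^d w_i^{k/d}.$$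
   Context: For $\alpha\ge0$ and a positive measurable function $g$, the class $\Gamma_\alpha(g)$ consists of the measurable functions $f$ such that $\lim_{t\to\infty} f(t+xg(t))/f(t)=e^{-\alpha x}$ for all $x\in\mathbb{R}$. (For $f\in\Gamma_\alpha(g)$ the function $g$ is then self-neglecting: $g(t)/t\to0$ and $g(t+xg(t))/g(t)\to1$ locally uniformly in $x\in\mathbb{R}$.) ''Ultimately decreasing'' means non-increasing on $[t_0,\infty)$ for some $t_0$. *)

(* Defs.v *)
From HB Require Import structures.
From mathcomp Require Import all_boot all_order all_algebra.
From mathcomp Require Import all_classical all_reals all_analysis.
Set Implicit Arguments. Unset Strict Implicit. Unset Printing Implicit Defensive.
Import Order.TTheory GRing.Theory Num.Theory.
Import numFieldNormedType.Exports.
Local Open Scope classical_set_scope.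
Local Open Scope ring_scope.

Definition Gamma_class (R : realType) (alpha : R) (g f : R -> R) : Prop :=
  measurable_fun (`[0, +oo[%classic : set R) f /\
  forall x : R, (f (t + x * g t) / f t) @[t --> +oo] --> expR (- (alpha * x)).

Definition ult_decreasing (R : realType) (g : R -> R) : Prop :=
  exists t0 : R, forall s t, t0 <= s -> s <= t -> g t <= g s.

Definition laplace_transform_pos (R : realType) (phi : R -> R) : Prop :=
  exists P : probability R R, P (`]0, +oo[%classic : set R) = 1%E /\
    forall t : R, 0 <= t -> (phi t)%:E = (\int[P]_x (expR (- (t * x)))%:E)%E.

Definition arch_inv (R : realType) (phi : R -> R) (u : R) : R :=
  xget 0 [set t | 0 <= t /\ phi t = u].

(* Archimedean copula; C(u) = 0 as soon as some u_i = 0 (phi^{-1}(0) = +oo) *)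
Definition arch_copula (R : realType) (d : nat) (phi : R -> R) (v : 'I_d -> R) : R :=
  if `[< forall i, 0 < v i >] then phi (\sum_(i < d) arch_inv phi (v i)) else 0.

(* Main.v *)
From HB Require Import structures.
From mathcomp Require Import all_boot all_order all_algebra.
From mathcomp Require Import all_classical all_reals all_analysis.
From mathcomp Require Import lra ring.
Require Import Defs.
Import Order.TTheory GRing.Theory Num.Theory.
Import numFieldNormedType.Exports.
Local Open Scope classical_set_scope.
Local Open Scope ring_scope.

Lemma core (R : realType) (phi g : R -> R) (alpha : R) (T : Type)
  (F : set_system T) (FF : ProperFilter F) (t0 : R) :
  0 <= t0 -> 0 <= alpha ->
  (forall s t, 0 <= s -> s <= t -> phi t <= phi s) ->
  (forall t, 0 <= t -> 0 < phi t) ->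
  (forall t, 0 <= t -> 0 < g t) ->
  (forall t, t0 <= t -> g t <= g t0) ->
  (forall x, (phi (t + x * g t) / phi t) @[t --> +oo] --> expR (- (alpha * x))) ->
  forall (tt xx : T -> R) (x0 : R), tt @ F --> +oo -> xx @ F --> x0 ->
  (phi (tt u + xx u * g (tt u)) / phi (tt u)) @[u --> F] --> expR (- (alpha * x0)).
Proof.
move=> t00 a0 dec ppos gpos gdec HG tt xx x0 Htt Hxx.
apply/cvgrPdist_lt => e e0.
have e20 : 0 < e / 2 by rewrite divr_gt0.
have hc : (fun y => expR (- (alpha * y))) @ x0 --> expR (- (alpha * x0)).
  apply: continuous_comp; last exact: continuous_expR.
  apply: continuousN. apply: continuousM. exact: cvg_cst. exact: cvg_id.
move: hc => /cvgrPdist_lt /(_ _ e20) /nbhs_ballP [de /= de0 Hde].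
have de20 : 0 < de / 2 by rewrite divr_gt0.
set a := x0 + de / 2; set b := x0 - de / 2.
have ha : `|expR (- (alpha * x0)) - expR (- (alpha * a))| < e / 2.
  apply: Hde; rewrite /ball /= /a opprD addrA subrr add0r normrN gtr0_norm //.
  lra.
have hb : `|expR (- (alpha * x0)) - expR (- (alpha * b))| < e / 2.
  apply: Hde; rewrite /ball /= /b opprD addrA subrr add0r opprK gtr0_norm //.
  lra.
have /cvgrPdist_lt /(_ _ e20) HGa := HG a.
have /cvgrPdist_lt /(_ _ e20) HGb := HG b.
have /cvgrPdist_lt /(_ _ de20) Hx := Hxx.
set M := t0 + (`|x0| + de) * g t0.
have Ht : \forall u \near F, M <= tt u.
  by move/cvgryPge : Htt; apply.
have HGa' : \forall u \near F, `|expR (- (alpha * a)) - phi (tt u + a * g (tt u)) / phi (tt u)| < e / 2.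
  exact: (Htt _ HGa).
have HGb' : \forall u \near F, `|expR (- (alpha * b)) - phi (tt u + b * g (tt u)) / phi (tt u)| < e / 2.
  exact: (Htt _ HGb).
near=> u.
have Hu : M <= tt u by near: u.
have ga : `|expR (- (alpha * a)) - phi (tt u + a * g (tt u)) / phi (tt u)| < e / 2 by near: u.
have gb : `|expR (- (alpha * b)) - phi (tt u + b * g (tt u)) / phi (tt u)| < e / 2 by near: u.
have xu : `|x0 - xx u| < de / 2 by near: u.
set t := tt u.
have gt0 : 0 < g t0 by apply: gpos.
have tge : t0 <= t.
  apply: le_trans Hu; rewrite /M lerDl; apply: mulr_ge0 => //.
  by rewrite addr_ge0 // ltW. exact: ltW.
have tg0 : 0 <= t := le_trans t00 tge.
have gtt : 0 < g t by apply: gpos.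
have gle : g t <= g t0 by apply: gdec.
have pos : forall y, `|y| <= `|x0| + de -> 0 <= t + y * g t.
  move=> y Hy.
  have h1 : - (`|y| * g t) <= y * g t.
    rewrite -mulNr; apply: ler_wpM2r; first exact: ltW.
    by rewrite lerNl -normrN ler_norm.
  have h2 : `|y| * g t <= (`|x0| + de) * g t0.
    apply: ler_pM => //; exact: ltW.
  have Hu2 : M <= t := Hu. rewrite /M in Hu2. lra.
move: xu => /ltr_normlP [xu1 xu2].
have hxa : `|a| <= `|x0| + de.
  rewrite /a; apply: le_trans (ler_normD _ _) _; rewrite (gtr0_norm de20); lra.
have hxb : `|b| <= `|x0| + de.
  rewrite /b; apply: le_trans (ler_normB _ _) _; rewrite (gtr0_norm de20); lra.
have hxx : `|xx u| <= `|x0| + de.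
  have -> : xx u = x0 - (x0 - xx u) by rewrite opprB addrC subrK.
  apply: le_trans (ler_normB _ _) _; apply: lerD => //.
  apply: ltW; rewrite ltr_norml; lra.
have pt : 0 < phi t by apply: ppos.
have m1 : phi (t + a * g t) <= phi (t + xx u * g t).
  apply: dec; first exact: pos. rewrite lerD2l ler_pM2r // /a; lra.
have m2 : phi (t + xx u * g t) <= phi (t + b * g t).
  apply: dec; first exact: pos. rewrite lerD2l ler_pM2r // /b; lra.
have m1' : phi (t + a * g t) / phi t <= phi (t + xx u * g t) / phi t.
  by apply: ler_wpM2r => //; rewrite invr_ge0 ltW.
have m2' : phi (t + xx u * g t) / phi t <= phi (t + b * g t) / phi t.
  by apply: ler_wpM2r => //; rewrite invr_ge0 ltW.
move: ga gb ha hb => /ltr_normlP [ga1 ga2] /ltr_normlP [gb1 gb2] /ltr_normlP [ha1 ha2] /ltr_normlP [hb1 hb2].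
rewrite ltr_norml; rewrite /t in m1' m2' *; lra.
Unshelve. all: by end_near. Qed.

Lemma inv_spec (R : realType) (phi : R -> R) (v : R) :
  {within `[0, +oo[, continuous phi} -> phi 0 = 1 ->
  phi t @[t --> +oo] --> 0 -> 0 < v -> v <= 1 ->
  0 <= arch_inv phi v /\ phi (arch_inv phi v) = v.
Proof.
move=> cphi p0 plim v0 v1.
rewrite /arch_inv; apply: (@xgetPex _ 0 (fun t => 0 <= t /\ phi t = v)).
have [M [M0 HM]] : exists M, 0 <= M /\ phi M < v.
  move: plim => /cvgr_lt /(_ _ v0) H. rewrite /= in H. case: H => M [_ HM].
  exists (Num.max M 0 + 1); split; first by rewrite addr_ge0 // le_max lexx orbT.
  apply: HM; have hm : M <= Num.max M 0 by rewrite le_max lexx.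
  rewrite /=; lra.
have cM : {within `[0, M], continuous phi}.
  apply: continuous_subspaceW cphi => x /=; rewrite !in_itv /= => /andP [-> _].
  by [].
have [|c] := @IVT _ phi 0 M v M0 cM.
  by rewrite p0 ge_min (ltW HM) orbT /= le_max v1.
by rewrite in_itv /= => /andP [c0 _] pc; exists c.
Qed.

Lemma psi_infty (R : realType) (phi : R -> R) :
  {within `[0, +oo[, continuous phi} -> phi 0 = 1 ->
  phi t @[t --> +oo] --> 0 ->
  (forall s t, 0 <= s -> s <= t -> phi t <= phi s) ->
  (forall t, 0 <= t -> 0 < phi t) ->
  arch_inv phi u @[u --> 0^'+] --> +oo.
Proof.
move=> cphi p0 plim dec ppos.
apply/cvgryPge => A.
set M := Num.max A 0.
have M0 : 0 <= M by rewrite le_max lexx orbT.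
have pM := ppos _ M0.
have pM1 : phi M <= 1 by rewrite -p0; apply: dec.
near=> u.
have u0 : 0 < u by near: u; apply: nbhs_right_gt.
have uM : u < phi M by near: u; apply: nbhs_right_lt.
have [h1 h2] := inv_spec _ _ _ cphi p0 plim u0 (ltW (lt_le_trans uM pM1)).
have AM : A <= M by rewrite le_max lexx.
apply: le_trans AM _.
rewrite leNgt; apply/negP => H.
have := dec _ _ h1 (ltW H); rewrite h2; lra.
Unshelve. all: by end_near. Qed.

Lemma offset_pos (R : realType) (g : R -> R) (t0 K t y : R) :
  0 <= t0 -> 0 <= K -> (forall t, 0 <= t -> 0 < g t) ->
  (forall t, t0 <= t -> g t <= g t0) ->
  t0 + K * g t0 <= t -> `|y| <= K -> 0 <= t + y * g t.
Proof.
move=> t00 K0 gpos gdec Ht Hy.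
have gt0 : 0 < g t0 by apply: gpos.
have tge : t0 <= t by apply: le_trans Ht; rewrite lerDl mulr_ge0 // ltW.
have gtt : 0 < g t by apply: gpos; apply: le_trans tge.
have gle : g t <= g t0 by apply: gdec.
have h1 : - (`|y| * g t) <= y * g t.
  rewrite -mulNr; apply: ler_wpM2r; first exact: ltW.
  by rewrite lerNl -normrN ler_norm.
have h2 : `|y| * g t <= K * g t0.
  apply: ler_pM => //; exact: ltW.
lra.
Qed.

Lemma inv_ratio (R : realType) (phi g : R -> R) (alpha t0 w : R) :
  {within `[0, +oo[, continuous phi} -> phi 0 = 1 ->
  phi t @[t --> +oo] --> 0 ->
  (forall s t, 0 <= s -> s <= t -> phi t <= phi s) ->
  (forall t, 0 <= t -> 0 < phi t) ->
  0 <= t0 -> 0 < alpha ->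
  (forall t, 0 <= t -> 0 < g t) ->
  (forall t, t0 <= t -> g t <= g t0) ->
  (forall x, (phi (t + x * g t) / phi t) @[t --> +oo] --> expR (- (alpha * x))) ->
  0 < w ->
  ((arch_inv phi (u * w) - arch_inv phi u) / g (arch_inv phi u))
     @[u --> 0^'+] --> - ln w / alpha.
Proof.
move=> cphi p0 plim dec ppos t00 a0 gpos gdec HG w0.
have Hpsi := psi_infty _ _ cphi p0 plim dec ppos.
apply/cvgrPdist_lt => e e0.
set A := - ln w / alpha.
set a := A + e / 2; set b := A - e / 2.
have hAa : alpha * a = - ln w + alpha * (e / 2).
  by rewrite /a /A; field; rewrite lt0r_neq0.
have hAb : alpha * b = - ln w - alpha * (e / 2).
  by rewrite /b /A; field; rewrite lt0r_neq0.
have ae0 : 0 < alpha * (e / 2) by rewrite mulr_gt0 // divr_gt0.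
have ea : expR (- (alpha * a)) < w.
  rewrite hAa opprD opprK expRD lnK ?posrE //.
  have : expR (- (alpha * (e / 2))) < 1 by rewrite expR_lt1 oppr_lt0.
  nra.
have eb : w < expR (- (alpha * b)).
  rewrite hAb opprB addrC opprK expRD lnK ?posrE //.
  have : 1 < expR (alpha * (e / 2)) by rewrite expR_gt1.
  nra.
have /cvgr_lt /(_ _ ea) Pa := HG a.
have /cvgr_gt /(_ _ eb) Pb := HG b.
set K := `|a| + `|b|.
have K0 : 0 <= K by rewrite addr_ge0.
have PM : \forall t \near +oo, t0 + K * g t0 <= t by apply: nbhs_pinfty_ge; rewrite num_real.
have Pa' := Hpsi _ Pa.
have Pb' := Hpsi _ Pb.
have PM' := Hpsi _ PM.
have z0 : 0 < (1 + w)^-1 by rewrite invr_gt0; lra.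
near=> u.
have u0 : 0 < u by near: u; apply: nbhs_right_gt.
have uz : u < (1 + w)^-1 by near: u; apply: nbhs_right_lt.
have uz' : u * (1 + w) < 1 by rewrite -ltr_pdivlMr; lra.
have u1 : u <= 1 by nra.
have uw1 : u * w <= 1 by nra.
have uw0 : 0 < u * w by rewrite mulr_gt0.
have [t0' pt] := inv_spec _ _ _ cphi p0 plim u0 u1.
have [s0 ps] := inv_spec _ _ _ cphi p0 plim uw0 uw1.
have ha : phi (arch_inv phi u + a * g (arch_inv phi u)) / phi (arch_inv phi u) < w by near: u.
have hb : w < phi (arch_inv phi u + b * g (arch_inv phi u)) / phi (arch_inv phi u) by near: u.
have hM : t0 + K * g t0 <= arch_inv phi u by near: u.
set t := arch_inv phi u in t0' pt ha hb hM *.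
set s := arch_inv phi (u * w) in s0 ps *.
rewrite pt in ha hb.
have gt0 : 0 < g t by apply: gpos.
have pa : 0 <= t + a * g t by apply: (offset_pos _ _ t0 K) => //; rewrite /K lerDl.
have pb : 0 <= t + b * g t by apply: (offset_pos _ _ t0 K) => //; rewrite /K lerDr.
have ha' : phi (t + a * g t) < w * u by rewrite -ltr_pdivrMr.
have hb' : w * u < phi (t + b * g t) by rewrite -ltr_pdivlMr.
have sa : s < t + a * g t.
  rewrite ltNge; apply/negP => H.
  have := dec _ _ pa H; rewrite ps; lra.
have sb : t + b * g t < s.
  rewrite ltNge; apply/negP => H.
  have := dec _ _ s0 H; rewrite ps; lra.
have x1 : (s - t) / g t < a by rewrite ltr_pdivrMr //; lra.
have x2 : b < (s - t) / g t by rewrite ltr_pdivlMr //; lra.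
rewrite ltr_norml; rewrite /a /b in x1 x2; lra.
Unshelve. all: by end_near. Qed.

Lemma psi_infty_c (R : realType) (phi : R -> R) (c : R) :
  {within `[0, +oo[, continuous phi} -> phi 0 = 1 ->
  phi t @[t --> +oo] --> 0 ->
  (forall s t, 0 <= s -> s <= t -> phi t <= phi s) ->
  (forall t, 0 <= t -> 0 < phi t) -> 0 < c ->
  arch_inv phi (u * c) @[u --> 0^'+] --> +oo.
Proof.
move=> cphi p0 plim dec ppos c0.
apply/cvgryPge => A.
set M := Num.max A 0.
have M0 : 0 <= M by rewrite le_max lexx orbT.
have pM := ppos _ M0.
have pM1 : phi M <= 1 by rewrite -p0; apply: dec.
have pMc : 0 < phi M / c by rewrite divr_gt0.
near=> u.
have u0 : 0 < u by near: u; apply: nbhs_right_gt.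
have uM : u < phi M / c by near: u; apply: nbhs_right_lt.
have uc0 : 0 < u * c by rewrite mulr_gt0.
have ucM : u * c < phi M by rewrite -ltr_pdivlMr.
have [h1 h2] := inv_spec _ _ _ cphi p0 plim uc0 (ltW (lt_le_trans ucM pM1)).
have AM : A <= M by rewrite le_max lexx.
apply: le_trans AM _.
rewrite leNgt; apply/negP => H.
have := dec _ _ h1 (ltW H); rewrite h2; lra.
Unshelve. all: by end_near. Qed.

Theorem theorem3p3 (R : realType) (d : nat) (phi g : R -> R) (alpha k tau : R)
  (w : 'I_d -> R) :
  (2 <= d)%N ->
  laplace_transform_pos phi ->
  (forall t, 0 <= t -> 0 <= phi t <= 1) ->
  {within `[0, +oo[, continuous phi} ->
  (forall s t, 0 <= s -> s < t -> phi t < phi s) ->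
  phi 0 = 1 ->
  phi t @[t --> +oo] --> 0 ->
  0 < alpha ->
  (forall t, 0 <= t -> 0 < g t) ->
  measurable_fun (`[0, +oo[%classic : set R) g ->
  ult_decreasing g ->
  Gamma_class alpha g phi ->
  1 <= k -> k <= d%:R ->
  0 < tau ->
  (phi (t * d%:R) / phi t `^ k) @[t --> +oo] --> tau ->
  (forall i, 0 <= w i) ->
  (arch_copula phi (fun i => u * w i) / u `^ k) @[u --> 0^'+] -->
    tau * \prod_(i < d) w i `^ (k / d%:R).
Proof.
move=> d2 _ p01 cphi sdec p0 plim a0 gpos _ [t1 gdec1] [_ HG] k1 _ tau0 Hk w0.
have dec : forall s t, 0 <= s -> s <= t -> phi t <= phi s.
  move=> s t s0; rewrite le_eqVlt => /predU1P [-> // | st].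
  exact/ltW/sdec.
have ppos : forall t, 0 <= t -> 0 < phi t.
  move=> t t0; have /andP [h _] := p01 (t + 1) (addr_ge0 t0 ler01).
  apply: le_lt_trans h _; apply: sdec => //; lra.
set t0 := Num.max t1 0.
have t00 : 0 <= t0 by rewrite le_max lexx orbT.
have gdec : forall t, t0 <= t -> g t <= g t0.
  move=> t Ht; apply: gdec1 => //; rewrite le_max lexx //.
have d0 : (0 < d)%N by apply: leq_trans d2.
have dR0 : (0 : R) < d%:R by rewrite ltr0n.
have kd0 : k / d%:R != 0 by rewrite mulf_neq0 // ?invr_eq0 lt0r_neq0 //; lra.
have [[i wi0] | wpos] : (exists i, w i = 0) \/ (forall i, 0 < w i).
  case: (pselect (exists i, w i = 0)) => [h|h]; [by left | right => i].
  by rewrite lt_neqAle w0 andbT eq_sym; apply/eqP => hi; apply: h; exists i.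
  rewrite (bigD1 i) //= wi0 powR0 // mul0r mulr0.
  apply/cvgrPdist_lt => e e0; near=> u.
  have u0 : 0 < u by near: u; apply: nbhs_right_gt.
  rewrite /arch_copula; case: asboolP => [H|_].
    by have := H i; rewrite wi0 mulr0 ltxx.
  by rewrite mul0r subr0 normr0.

have psi0 : forall v, 0 <= arch_inv phi v.
  by move=> v; rewrite /arch_inv; case: xgetP => [x _ [] | _].
set psi := arch_inv phi.
set S := fun u => \sum_(i < d) psi (u * w i).
set sbar := fun u => S u / d%:R.
set X := fun u => (\sum_(i < d) ((psi (u * w i) - psi u) / g (psi u))) / d%:R.
set x0 := (\sum_(i < d) (- ln (w i) / alpha)) / d%:R.
have Hpsi := psi_infty _ _ cphi p0 plim dec ppos.
have HX : X u @[u --> 0^'+] --> x0.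
  apply: cvgMr_tmp; apply: cvg_big => //; first exact: add_continuous.
  move=> i _; exact: (inv_ratio _ _ _ _ t0 _ cphi p0 plim dec ppos t00 a0 gpos gdec HG (wpos i)).
have Hcore := core _ _ _ _ _ _ _ t0 t00 (ltW a0) dec ppos gpos gdec HG _ _ _ Hpsi HX.
have Eq1 : \forall u \near 0^'+, psi u + X u * g (psi u) = sbar u.
  near=> u.
  have gt : 0 < g (psi u) by apply: gpos.
  rewrite /X /sbar /S -mulr_suml sumrB sumr_const card_ord -mulr_natr.
  field; rewrite ?lt0r_neq0 //.
have Hcore' : (phi (sbar u) / phi (psi u)) @[u --> 0^'+] --> expR (- (alpha * x0)).
  have E : {near 0^'+, (fun u => phi (psi u + X u * g (psi u)) / phi (psi u)) =1
     (fun u => phi (sbar u) / phi (psi u))}.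
    by near=> u; have /= -> := (near Eq1 u).
  exact: (cvg_trans (near_eq_cvg E) (Hcore (at_right_proper_filter 0))).
have i0 : 'I_d := Ordinal d0.
have Hsbar : sbar u @[u --> 0^'+] --> +oo.
  apply/cvgryPge => A.
  have := psi_infty_c _ _ (w i0) cphi p0 plim dec ppos (wpos i0).
  move=> /cvgryPge /(_ (A * d%:R)) H.
  near=> u.
  have h : A * d%:R <= psi (u * w i0) by near: u.
  rewrite /sbar /S ler_pdivlMr // (bigD1 i0) //=.
  apply: le_trans h _; rewrite lerDl; apply: sumr_ge0 => *; exact: psi0.
have HH := cvg_comp _ _ Hsbar Hk.
have Hl : ln (phi (sbar u) / phi (psi u)) @[u --> 0^'+] --> ln (expR (- (alpha * x0))).
  apply: cvg_comp Hcore' _; apply: continuous_ln; exact: expR_gt0.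
rewrite expRK in Hl.
have Hl2 : (k * ln (phi (sbar u) / phi (psi u))) @[u --> 0^'+] --> k * - (alpha * x0).
  by apply: cvgMl_tmp.
have Hln : expR (k * ln (phi (sbar u) / phi (psi u))) @[u --> 0^'+] --> expR (k * - (alpha * x0)).
  by apply: cvg_comp Hl2 _; exact: continuous_expR.
have Etarget : \prod_(i < d) w i `^ (k / d%:R) = expR (k * (- (alpha * x0))).
  rewrite (eq_bigr (fun i => expR (k / d%:R * ln (w i)))); last first.
    by move=> i _; rewrite /powR gt_eqF.
  rewrite -expR_sum; congr expR.
  rewrite -mulr_sumr /x0 -mulr_suml sumrN.
  field; rewrite ?lt0r_neq0 //.
rewrite Etarget.
apply: cvg_trans (cvgM HH Hln).
apply: near_eq_cvg; near=> u.
have u0 : 0 < u by near: u; apply: nbhs_right_gt.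
have u1 : u <= 1 by near: u; apply: nbhs_right_le; exact: ltr01.
have [_ pt] := inv_spec _ _ _ cphi p0 plim u0 u1.
have uw : forall i, 0 < u * w i by move=> i; rewrite mulr_gt0.
have sb0 : 0 <= sbar u by rewrite /sbar divr_ge0 // ?sumr_ge0 // => *; exact: psi0.
have ps := ppos _ sb0.
have pt0 := ppos _ (psi0 u).
rewrite /= /arch_copula asboolT //.
have -> : \sum_(i < d) arch_inv phi (u * w i) = sbar u * d%:R.
  by rewrite /sbar /S divfK // lt0r_neq0.
rewrite -[in u `^ k]pt.
have -> : ln (phi (sbar u) / phi (psi u)) = ln (phi (sbar u)) - ln (phi (psi u)).
  by rewrite ln_div // posrE.
rewrite /powR !gt_eqF // mulrBr expRB.
have e1 := expR_gt0 (k * ln (phi (sbar u))).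
have e2 := expR_gt0 (k * ln (phi (psi u))).
field; rewrite ?lt0r_neq0 //.
Unshelve. all: by end_near. Qed.
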